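(* Consider the planar system $$\frac{dN}{dt}=rN\left(1-\frac{N}{K}-\frac{h}{w+N}\right)-\frac{aNP}{b+N^2},\qquad \frac{dP}{dt}=\frac{cNP}{b+N^2}-\delta P,$$ where $r,K,h,w,a,b,c,\delta$ are positive constants with $w<K$, and suppose the Allee effect is weak, i.e. $h<w$. Let $$N_1=\frac{(K-w)+\sqrt{(K-w)^2-4K(h-w)}}{2}$$ and $E_1=(N_1,0)$. Then $E_1$ is locally asymptotically stable if $c<\frac{\delta(b+N_1^2)}{N_1}$, and unstable (a saddle) if $c>\frac{\delta(b+N_1^2)}{N_1}$.
   Context: $N(t)$ is the prey density and $P(t)$ the predator density. $E_1$ is the (unique) predator-free equilibrium with positive prey density in the weak Allee case. *)

(* Defs.v *)
From Stdlib Require Import Reals Lra.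
From Coquelicot Require Import Coquelicot.
Open Scope R_scope.

Definition fN (r K h w a b : R) (N P : R) : R :=
  r * N * (1 - N / K - h / (w + N)) - a * N * P / (b + N ^ 2).
Definition fP (b c delta : R) (N P : R) : R :=
  c * N * P / (b + N ^ 2) - delta * P.

Definition dist2 (x1 y1 x2 y2 : R) : R := sqrt ((x1 - x2) ^ 2 + (y1 - y2) ^ 2).

Definition is_solution_on (F G : R -> R -> R) (T : R) (N P : R -> R) : Prop :=
  forall t, 0 <= t <= T ->
    is_derive N t (F (N t) (P t)) /\ is_derive P t (G (N t) (P t)).

Definition is_global_solution (F G : R -> R -> R) (N P : R -> R) : Prop :=
  forall t, 0 <= t ->
    is_derive N t (F (N t) (P t)) /\ is_derive P t (G (N t) (P t)).

Definition lyapunov_stable (F G : R -> R -> R) (x y : R) : Prop :=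
  forall eps, 0 < eps -> exists d, 0 < d /\
    forall T N P, is_solution_on F G T N P ->
      dist2 (N 0) (P 0) x y < d ->
      forall t, 0 <= t <= T -> dist2 (N t) (P t) x y < eps.

Definition locally_attractive (F G : R -> R -> R) (x y : R) : Prop :=
  exists d, 0 < d /\
    forall N P, is_global_solution F G N P ->
      dist2 (N 0) (P 0) x y < d ->
      is_lim N p_infty x /\ is_lim P p_infty y.

Definition locally_asymptotically_stable (F G : R -> R -> R) (x y : R) : Prop :=
  lyapunov_stable F G x y /\ locally_attractive F G x y.

Definition unstable (F G : R -> R -> R) (x y : R) : Prop :=
  ~ lyapunov_stable F G x y.

Definition jac11 (F : R -> R -> R) x y := Derive (fun n => F n y) x.
Definition jac12 (F : R -> R -> R) x y := Derive (fun p => F x p) y.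

Definition jacobian_eigenvalue (F G : R -> R -> R) (x y lam : R) : Prop :=
  exists v1 v2, (v1 <> 0 \/ v2 <> 0) /\
    jac11 F x y * v1 + jac12 F x y * v2 = lam * v1 /\
    jac11 G x y * v1 + jac12 G x y * v2 = lam * v2.

Definition saddle (F G : R -> R -> R) (x y : R) : Prop :=
  exists l1 l2, l1 < 0 < l2 /\
    jacobian_eigenvalue F G x y l1 /\ jacobian_eigenvalue F G x y l2.

Definition N1 (K h w : R) : R :=
  ((K - w) + sqrt ((K - w) ^ 2 - 4 * K * (h - w))) / 2.

(* Main.v *)
Require Import Defs.
From Stdlib Require Import Reals Lra Classical ZArith Lia.
From Coquelicot Require Import Coquelicot.
Open Scope R_scope.

Lemma cont_ed (f : R -> R) x : continuous f x ->
  forall e, 0 < e -> exists d, 0 < d /\ forall y, Rabs (y - x) < d -> Rabs (f y - f x) < e.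
Proof.
  intros Hc e He.
  destruct (proj1 (filterlim_locally f (f x)) Hc (mkposreal e He)) as [d Hd].
  exists d; split; [apply cond_pos|]. intros y Hy. apply (Hd y). exact Hy.
Qed.

Lemma ed_cont (f : R -> R) x :
  (forall e, 0 < e -> exists d, 0 < d /\ forall y, Rabs (y - x) < d -> Rabs (f y - f x) < e)
  -> continuous f x.
Proof.
  intros H. apply filterlim_locally. intros [e He].
  destruct (H e He) as [d [Hd H']]. exists (mkposreal d Hd). intros y Hy. apply H'. exact Hy.
Qed.

Lemma cont_ind (f : R -> R) (T c : R) :
  (forall t, 0 <= t <= T -> continuous f t) -> f 0 < c ->
  (forall s, 0 <= s <= T -> (forall u, 0 <= u <= s -> f u <= c) -> f s < c) ->
  forall t, 0 <= t <= T -> f t < c.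
Proof.
  intros Hc H0 Hs.
  destruct (Rle_or_lt 0 T) as [HT|HT]; [|intros; lra].
  set (A := fun s => 0 <= s <= T /\ forall u, 0 <= u <= s -> f u < c).
  assert (HA0 : A 0). { split; [lra|]. intros u Hu. replace u with 0 by lra. exact H0. }
  assert (Hb : bound A). { exists T. intros s [Hs' _]. lra. }
  destruct (completeness A Hb (ex_intro _ 0 HA0)) as [sg [Hub Hlub]].
  assert (Hsg0 : 0 <= sg) by (apply Hub; exact HA0).
  assert (HsgT : sg <= T) by (apply Hlub; intros s [Hs' _]; lra).
  assert (C1 : forall u, 0 <= u < sg -> f u < c).
  { intros u Hu. destruct (classic (exists s, A s /\ u < s)) as [[s [[_ Hs2] Hus]]|Hn].
    - apply Hs2; lra.
    - exfalso. assert (sg <= u). { apply Hlub. intros s Hs'. destruct (Rle_or_lt s u); auto.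
        exfalso; apply Hn; exists s; auto. } lra. }
  assert (C2 : f sg <= c).
  { destruct (Rle_or_lt (f sg) c) as [h|h]; auto. exfalso.
    destruct (cont_ed f sg (Hc sg (conj Hsg0 HsgT)) (f sg - c)) as [d [Hd Hd']]; [lra|].
    destruct (Rle_or_lt sg 0) as [h0|h0].
    - replace sg with 0 in h by lra. lra.
    - set (u := Rmax 0 (sg - d/2)).
      assert (0 <= u < sg) by (unfold u; apply Rmax_case_strong; intros; lra).
      specialize (C1 u H). specialize (Hd' u).
      assert (Rabs (u - sg) < d) by (unfold u; apply Rmax_case_strong; intros; apply Rabs_def1; lra).
      specialize (Hd' H1). apply Rabs_def2 in Hd'. lra. }
  assert (C3 : f sg < c).
  { apply Hs; [lra|]. intros u Hu. destruct (Rle_or_lt sg u).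
    - replace u with sg by lra. exact C2.
    - left. apply C1. lra. }
  assert (C4 : sg = T).
  { destruct (Rle_or_lt T sg) as [h|h]; [lra|]. exfalso.
    destruct (cont_ed f sg (Hc sg (conj Hsg0 HsgT)) (c - f sg)) as [d [Hd Hd']]; [lra|].
    set (s' := Rmin T (sg + d/2)).
    assert (HA : A s').
    { split. unfold s'; apply Rmin_case_strong; intros; lra.
      intros u Hu. destruct (Rlt_or_le u sg) as [h1|h1].
      - apply C1; lra.
      - assert (Rabs (u - sg) < d).
        { assert (u <= sg + d/2) by (unfold s' in Hu; revert Hu; apply Rmin_case_strong; intros; lra).
          apply Rabs_def1; lra. }
        specialize (Hd' u H). apply Rabs_def2 in Hd'. lra. }
    specialize (Hub s' HA). unfold s' in Hub. revert Hub; apply Rmin_case_strong; intros; lra. }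
  intros t Ht. destruct (Rlt_or_le t sg). apply C1; lra. replace t with sg by lra. exact C3.
Qed.

Lemma mono_dec (f df : R -> R) a b : a <= b ->
  (forall t, a <= t <= b -> is_derive f t (df t)) ->
  (forall t, a <= t <= b -> df t <= 0) -> f b <= f a.
Proof.
  intros Hab Hd Hneg.
  destruct (MVT_gen f a b df) as [c [Hc Heq]].
  - intros x Hx. rewrite Rmin_left in Hx by lra. rewrite Rmax_right in Hx by lra. apply Hd; lra.
  - intros x Hx. rewrite Rmin_left in Hx by lra. rewrite Rmax_right in Hx by lra.
    apply continuity_pt_filterlim. apply (ex_derive_continuous (K:=R_AbsRing) (V:=R_NormedModule) f x). eexists. apply Hd; lra.
  - rewrite Rmin_left in Hc by lra. rewrite Rmax_right in Hc by lra.
    specialize (Hneg c Hc). assert (df c * (b - a) <= 0).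
    { apply Rmult_le_0_r; lra. } lra.
Qed.

Lemma is_derive_eq (f : R -> R) x l l' : is_derive f x l -> l = l' -> is_derive f x l'.
Proof. intros H ->; exact H. Qed.

Lemma is_derive_sqd (f : R -> R) t a x : is_derive f t a ->
  is_derive (fun t => (f t - x)^2) t (2 * (f t - x) * a).
Proof.
  intros H.
  assert (H1 : is_derive (fun t => f t - x) t a).
  { eapply is_derive_eq. apply (is_derive_minus f (fun _ => x) t a 0); auto. apply (is_derive_const x t).
    unfold minus, opp, plus; simpl. ring. }
  eapply is_derive_eq. apply (is_derive_pow (fun t => f t - x) 2 t a H1). simpl. ring.
Qed.

Lemma is_derive_V (N P : R -> R) t a b x y k : is_derive N t a -> is_derive P t b ->
  is_derive (fun t => (N t - x)^2 + k*(P t - y)^2) t (2*(N t - x)*a + k*(2*(P t - y)*b)).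
Proof.
  intros Ha Hb.
  apply (is_derive_plus (fun t => (N t - x)^2) (fun t => k * (P t - y)^2)).
  apply is_derive_sqd; auto. apply is_derive_scal. apply is_derive_sqd; auto.
Qed.

Lemma is_derive_mexp (f : R -> R) t a g : is_derive f t a ->
  is_derive (fun t => f t * exp (g * t)) t (exp (g*t) * (a + g * f t)).
Proof.
  intros H.
  assert (He : is_derive (fun t => exp (g*t)) t (g * exp (g*t))).
  { auto_derive; auto. ring. }
  eapply is_derive_eq. apply (is_derive_mult f (fun t => exp (g*t)) t a _ H He).
  intros; apply Rmult_comm. unfold plus, mult; simpl. ring.
Qed.

Lemma abs_of_sq a c : 0 <= c -> a^2 <= c^2 -> Rabs a <= c.
Proof. intros Hc H. destruct (Rle_or_lt (Rabs a) c); auto.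
  assert (Rabs a ^2 = a^2) by (rewrite <- Rsqr_pow2 at 1; rewrite <- Rsqr_abs; unfold Rsqr; ring).
  nra. Qed.

Lemma cont_of_der (f : R -> R) t l : is_derive f t l -> continuous f t.
Proof. intros H. apply (ex_derive_continuous (K:=R_AbsRing) (V:=R_NormedModule) f t). eexists; eauto. Qed.

Section Lyap.
Variables (F G : R -> R -> R) (x y rho g k : R).
Hypothesis Hrho : 0 < rho.
Hypothesis Hg : 0 < g.
Hypothesis Hk : 1 <= k.
Hypothesis HL : forall N P, Rabs (N - x) <= rho ->
  2*(N-x)*F N P + k*(2*(P-y)*G N P) <= -g*((N-x)^2 + k*(P-y)^2).

Lemma lyap_core T N P c : is_solution_on F G T N P -> 0 < c <= rho ->
  (N 0 - x)^2 + k*(P 0 - y)^2 < c^2 ->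
  forall t, 0 <= t <= T -> (N t - x)^2 + k*(P t - y)^2 < c^2 /\
     ((N t - x)^2 + k*(P t - y)^2) * exp (g*t) <= (N 0 - x)^2 + k*(P 0 - y)^2.
Proof.
  intros Hs Hc H0.
  set (V := fun t => (N t - x)^2 + k*(P t - y)^2).
  set (dV := fun t => 2*(N t - x)*F (N t) (P t) + k*(2*(P t - y)*G (N t) (P t))).
  assert (HdV : forall t, 0 <= t <= T -> is_derive V t (dV t)).
  { intros t Ht. destruct (Hs t Ht). apply is_derive_V; auto. }
  assert (Hreg : forall s, 0 <= s <= T -> (forall u, 0 <= u <= s -> V u <= c^2) ->
     forall u, 0 <= u <= s -> dV u <= - g * V u).
  { intros s Hs' Hle u Hu. apply HL. specialize (Hle u Hu). unfold V in Hle.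
    assert (0 <= k*(P u - y)^2) by (apply Rmult_le_pos; [lra| apply pow2_ge_0]).
    assert (Rabs (N u - x) <= c) by (apply abs_of_sq; lra). lra. }
  assert (HV : forall t, 0 <= t <= T -> V t < c^2).
  { apply cont_ind.
    - intros t Ht. eapply cont_of_der. apply HdV; auto.
    - exact H0.
    - intros s Hs' Hle.
      assert (V s <= V 0).
      { apply (mono_dec V dV 0 s). lra. intros; apply HdV; lra.
        intros u Hu. specialize (Hreg s Hs' Hle u Hu).
        assert (0 <= V u) by (unfold V; assert (0 <= k*(P u - y)^2) by (apply Rmult_le_pos; [lra| apply pow2_ge_0]); 
           assert (0 <= (N u - x)^2) by apply pow2_ge_0; lra).
        nra. }
      unfold V at 2 in H. lra. }
  intros t Ht. split. apply HV; auto.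
  assert (Hall : forall u, 0 <= u <= t -> V u <= c^2) by (intros u Hu; left; apply HV; lra).
  assert (V t * exp (g*t) <= V 0 * exp (g*0)).
  { apply (mono_dec (fun t => V t * exp (g*t)) (fun t => exp (g*t) * (dV t + g * V t)) 0 t).
    lra. intros u Hu. apply is_derive_mexp. apply HdV; lra.
    intros u Hu. assert (dV u + g * V u <= 0).
    { pose proof (Hreg t Ht Hall u Hu). lra. }
    pose proof (exp_pos (g*u)). nra. }
  rewrite Rmult_0_r, exp_0, Rmult_1_r in H. exact H.
Qed.
End Lyap.

Lemma abs_of_sq_lt a c : 0 < c -> a^2 < c^2 -> Rabs a < c.
Proof. intros Hc H. destruct (Rle_or_lt c (Rabs a)); auto.
  assert (Rabs a ^2 = a^2) by (rewrite <- Rsqr_pow2 at 1; rewrite <- Rsqr_abs; unfold Rsqr; ring).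
  nra. Qed.

Lemma lim_decay (f : R -> R) l A g : 0 < g ->
  (forall t, 0 <= t -> (f t - l)^2 <= A * exp (-(g*t))) -> is_lim f p_infty l.
Proof.
  intros Hg H. apply is_lim_spec. intros [eps He]. simpl.
  set (A' := Rabs A + 1).
  assert (HA' : 0 < A') by (unfold A'; pose proof (Rabs_pos A); lra).
  assert (Hq : 0 < eps^2 / A') by (apply Rdiv_lt_0_compat; nra).
  exists (Rmax 0 (- ln (eps^2/A') / g)). intros t Ht.
  assert (H0 : 0 <= t) by (eapply Rle_trans; [apply Rmax_l|]; left; exact Ht).
  assert (H1 : - ln (eps^2/A') / g < t) by (eapply Rle_lt_trans; [apply Rmax_r|]; exact Ht).
  assert (H2 : - (g*t) < ln (eps^2/A')).
  { assert (- ln (eps ^ 2 / A') < g * t).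
    { apply (Rmult_lt_compat_l g) in H1; auto. unfold Rdiv in H1.
      replace (g * (- ln (eps ^ 2 * / A') * / g)) with (- ln (eps ^ 2 * / A')) in H1 by (field; lra). exact H1. }
    lra. }
  apply exp_increasing in H2. rewrite exp_ln in H2 by exact Hq.
  apply abs_of_sq_lt; auto.
  eapply Rle_lt_trans. apply H; auto.
  pose proof (exp_pos (-(g*t))).
  assert (A <= A') by (unfold A'; pose proof (Rle_abs A); lra).
  apply Rle_lt_trans with (A' * exp (- (g*t))). nra.
  apply (Rmult_lt_compat_l A') in H2; auto.
  replace (A' * (eps^2/A')) with (eps^2) in H2 by (field; lra). exact H2.
Qed.

Lemma dist2_lt a b c d e : 0 < e -> dist2 a b c d < e -> (a-c)^2 + (b-d)^2 < e^2.
Proof.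
  unfold dist2. intros He H.
  assert (0 <= (a-c)^2 + (b-d)^2) by (pose proof (pow2_ge_0 (a-c)); pose proof (pow2_ge_0 (b-d)); lra).
  pose proof (sqrt_sqrt _ H0). pose proof (sqrt_pos ((a-c)^2 + (b-d)^2)). nra.
Qed.

Lemma lt_dist2 a b c d e : 0 < e -> (a-c)^2 + (b-d)^2 < e^2 -> dist2 a b c d < e.
Proof.
  unfold dist2. intros He H.
  assert (0 <= (a-c)^2 + (b-d)^2) by (pose proof (pow2_ge_0 (a-c)); pose proof (pow2_ge_0 (b-d)); lra).
  rewrite <- (sqrt_pow2 e) by lra. apply sqrt_lt_1_alt. lra.
Qed.

Section Lyap2.
Variables (F G : R -> R -> R) (x y rho g k : R).
Hypothesis Hrho : 0 < rho.
Hypothesis Hg : 0 < g.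
Hypothesis Hk : 1 <= k.
Hypothesis HL : forall N P, Rabs (N - x) <= rho ->
  2*(N-x)*F N P + k*(2*(P-y)*G N P) <= -g*((N-x)^2 + k*(P-y)^2).

Lemma start_ok N0 P0 c : 0 < c -> dist2 N0 P0 x y < c/(k+1) ->
  (N0 - x)^2 + k*(P0 - y)^2 < c^2.
Proof.
  intros Hc H. apply dist2_lt in H; [|apply Rdiv_lt_0_compat; lra].
  assert (Hk1 : 0 < k + 1) by lra.
  assert ((c/(k+1))^2 * k < c^2).
  { replace ((c/(k+1))^2 * k) with (c^2 * (k/((k+1)*(k+1)))) by (field; lra).
    assert (k / ((k+1)*(k+1)) < 1).
    { apply (Rmult_lt_reg_r ((k+1)*(k+1))). nra. unfold Rdiv. rewrite Rmult_assoc, Rinv_l by nra. nra. }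
    assert (0 < c^2) by nra. nra. }
  pose proof (pow2_ge_0 (N0-x)). pose proof (pow2_ge_0 (P0-y)). nra.
Qed.

Lemma lyap_las : locally_asymptotically_stable F G x y.
Proof.
  split.
  - intros eps He. set (c := Rmin rho eps).
    assert (Hc : 0 < c <= rho) by (unfold c; apply Rmin_case_strong; lra).
    assert (Hce : c <= eps) by apply Rmin_r.
    exists (c/(k+1)). split. apply Rdiv_lt_0_compat; lra.
    intros T N P Hs H0 t Ht.
    destruct (lyap_core F G x y rho g k Hg Hk HL T N P c Hs Hc (start_ok _ _ c (proj1 Hc) H0) t Ht) as [H1 _].
    apply lt_dist2; auto.
    assert (0 <= (k-1)*(P t - y)^2) by (apply Rmult_le_pos; [lra|apply pow2_ge_0]). nra.
  - exists (rho/(k+1)). split. apply Rdiv_lt_0_compat; lra.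
    intros N P Hs H0.
    assert (Hst : forall t, 0 <= t -> ((N t - x)^2 + k*(P t - y)^2) * exp (g*t) <= (N 0 - x)^2 + k*(P 0 - y)^2).
    { intros t Ht. assert (Hs' : is_solution_on F G t N P) by (intros u Hu; apply Hs; lra).
      apply (lyap_core F G x y rho g k Hg Hk HL t N P rho Hs' (conj Hrho (Rle_refl _)) (start_ok _ _ rho Hrho H0) t); lra. }
    assert (Hdec : forall t, 0 <= t -> (N t - x)^2 + k*(P t - y)^2 <= ((N 0 - x)^2 + k*(P 0 - y)^2) * exp (-(g*t))).
    { intros t Ht. specialize (Hst t Ht). 
      pose proof (exp_pos (g*t)). rewrite exp_Ropp.
      apply (Rmult_le_reg_r (exp (g*t))); auto. rewrite Rmult_assoc, Rinv_l by lra. lra. }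
    split.
    + apply (lim_decay N x ((N 0 - x)^2 + k*(P 0 - y)^2) g Hg). intros t Ht. specialize (Hdec t Ht).
      assert (0 <= k*(P t - y)^2) by (apply Rmult_le_pos; [lra|apply pow2_ge_0]). lra.
    + apply (lim_decay P y ((N 0 - x)^2 + k*(P 0 - y)^2) g Hg). intros t Ht. specialize (Hdec t Ht).
      assert (0 <= (k-1)*(P t - y)^2) by (apply Rmult_le_pos; [lra|apply pow2_ge_0]).
      pose proof (pow2_ge_0 (N t - x)). nra.
Qed.
End Lyap2.

Lemma alg_est x y ph qv mv al be M k :
  0 < al -> 0 < be -> 0 <= M -> be <= ph -> qv <= -al -> Rabs mv <= M ->
  k = 1 + M^2/(al*be) ->
  2*x*(-x*ph - mv*y) + k*(2*y*(y*qv)) <= - Rmin al be * (x^2 + k*y^2).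
Proof.
  intros Hal Hbe HM Hph Hq Hm Hk.
  assert (Hk1 : k*al = al + M^2/be) by (rewrite Hk; field; lra).
  assert (H1 : - 2*mv*x*y <= be*x^2 + M^2/be*y^2).
  { assert (Hxy : Rabs (mv*x*y) <= M * (Rabs x * Rabs y)).
    { rewrite !Rabs_mult. rewrite Rmult_assoc. apply Rmult_le_compat_r; auto.
      apply Rmult_le_pos; apply Rabs_pos. }
    assert (be*x^2 + M^2/be*y^2 - 2 * M * (Rabs x * Rabs y) = (be * Rabs x - M * Rabs y)^2 / be).
    { assert (Rabs x ^2 = x^2) by (rewrite <- Rsqr_pow2 at 1; rewrite <- Rsqr_abs; unfold Rsqr; ring).
      assert (Rabs y ^2 = y^2) by (rewrite <- Rsqr_pow2 at 1; rewrite <- Rsqr_abs; unfold Rsqr; ring).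
      rewrite <- H, <- H0. field. lra. }
    assert (0 <= (be * Rabs x - M * Rabs y)^2 / be) by (apply Rdiv_le_0_compat; [apply pow2_ge_0|lra]).
    assert (- (mv*x*y) <= M * (Rabs x * Rabs y)) by (pose proof (Rle_abs (-(mv*x*y))) as HH; rewrite Rabs_Ropp in HH; lra).
    lra. }
  assert (H2 : x^2*ph >= be * x^2) by (pose proof (pow2_ge_0 x); nra).
  assert (Hkpos : 1 <= k) by (rewrite Hk; assert (0 <= M^2/(al*be)) by (apply Rdiv_le_0_compat; [apply pow2_ge_0|nra]); lra).
  assert (H3 : k*(y^2*qv) <= - (k*al) * y^2).
  { assert (Hky : 0 <= k*y^2) by (pose proof (pow2_ge_0 y); nra).
    assert (Hq' : 0 <= -al - qv) by lra.
    pose proof (Rmult_le_pos _ _ Hky Hq'). nra. }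
  assert (H4 : 0 <= M^2/be) by (apply Rdiv_le_0_compat; [apply pow2_ge_0|lra]).
  assert (Hg1 : Rmin al be <= al) by apply Rmin_l.
  assert (Hg2 : Rmin al be <= be) by apply Rmin_r.
  assert (Hg0 : 0 < Rmin al be) by (apply Rmin_case; lra).
  pose proof (pow2_ge_0 x). pose proof (pow2_ge_0 y).
  assert (- Rmin al be * (x^2 + k*y^2) >= - be * x^2 - k*al*y^2).
  { assert (Hky : 0 <= k*y^2) by nra.
    pose proof (Rmult_le_pos (be - Rmin al be) (x^2) ltac:(lra) H).
    pose proof (Rmult_le_pos (al - Rmin al be) (k*y^2) ltac:(lra) Hky). nra. }
  replace (2*x*(-x*ph - mv*y) + k*(2*y*(y*qv))) with (-2*(x^2*ph) - 2*mv*x*y + 2*(k*(y^2*qv))) by ring.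
  assert (0 <= al*y^2) by nra.
  assert (- (k * al) * y ^ 2 = - (al + M^2/be) * y^2) by (rewrite Hk1; ring).
  lra.
Qed.

Section Model.
Variables (r K h w a b c delta : R).
Hypotheses (Hr : 0 < r) (HK : 0 < K) (Hh : 0 < h) (Hw : 0 < w) (Ha : 0 < a) (Hb : 0 < b)
  (Hc : 0 < c) (Hd : 0 < delta) (HwK : w < K) (Hhw : h < w).

Definition sD := sqrt ((K - w) ^ 2 - 4 * K * (h - w)).
Definition N2 := ((K - w) - sD) / 2.
Definition phi (N : R) := r * N * (N - N2) / (K * (w + N)).
Definition mm (N : R) := a * N / (b + N^2).
Definition qq (N : R) := c * N / (b + N^2) - delta.

Lemma sD_pos : 0 < sD.
Proof. unfold sD. apply sqrt_lt_R0. pose proof (pow2_ge_0 (K-w)). nra. Qed.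

Lemma sD_sq : sD^2 = (K - w) ^ 2 - 4 * K * (h - w).
Proof. unfold sD. rewrite <- Rsqr_pow2. apply Rsqr_sqrt. pose proof (pow2_ge_0 (K-w)). nra. Qed.

Lemma N1_pos : 0 < N1 K h w.
Proof. unfold N1. fold sD. pose proof sD_pos. lra. Qed.

Lemma prod_roots N : (N - N1 K h w) * (N - N2) = N^2 - (K-w)*N + K*(h-w).
Proof. unfold N1, N2. fold sD. pose proof sD_sq. nra. Qed.

Lemma fN_id N P : 0 <= N -> fN r K h w a b N P = -(N - N1 K h w) * phi N - mm N * P.
Proof.
  intros HN.
  assert (E : r*N*(1 - N/K - h/(w+N)) = -(r*N*((N - N1 K h w)*(N - N2)))/(K*(w+N))).
  { rewrite prod_roots. field. lra. }
  unfold fN, phi, mm. rewrite E.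
  assert (0 < b + N^2) by (pose proof (pow2_ge_0 N); lra).
  field. lra.
Qed.

Lemma fP_id N P : fP b c delta N P = P * qq N.
Proof. unfold fP, qq. assert (0 < b + N^2) by (pose proof (pow2_ge_0 N); lra). field. lra. Qed.

Lemma phi_pos : 0 < phi (N1 K h w).
Proof.
  unfold phi. pose proof N1_pos. assert (N1 K h w - N2 = sD) by (unfold N1, N2; fold sD; lra).
  rewrite H0. pose proof sD_pos. apply Rdiv_lt_0_compat. apply Rmult_lt_0_compat; [nra|lra]. nra.
Qed.

Lemma cont_phi : continuous phi (N1 K h w).
Proof. pose proof N1_pos. apply (ex_derive_continuous (K:=R_AbsRing) (V:=R_NormedModule)).
  unfold phi. auto_derive. nra. Qed.
Lemma cont_mm : continuous mm (N1 K h w).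
Proof. apply (ex_derive_continuous (K:=R_AbsRing) (V:=R_NormedModule)).
  unfold mm. auto_derive. pose proof (pow2_ge_0 (N1 K h w)). simpl in *. nra. Qed.
Lemma cont_qq : continuous qq (N1 K h w).
Proof. apply (ex_derive_continuous (K:=R_AbsRing) (V:=R_NormedModule)).
  unfold qq. auto_derive. pose proof (pow2_ge_0 (N1 K h w)). simpl in *. nra. Qed.

End Model.

Section S.
Variables (r K h w a b c delta : R).
Hypotheses (Hr : 0 < r) (HK : 0 < K) (Hh : 0 < h) (Hw : 0 < w) (Ha : 0 < a) (Hb : 0 < b)
  (Hc : 0 < c) (Hd : 0 < delta) (HwK : w < K) (Hhw : h < w).

Lemma near3 (f1 f2 f3 : R -> R) x0 e1 e2 e3 : continuous f1 x0 -> continuous f2 x0 -> continuous f3 x0 ->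
  0 < e1 -> 0 < e2 -> 0 < e3 -> 0 < x0 ->
  exists rho, 0 < rho /\ rho <= x0 /\ forall y, Rabs (y - x0) <= rho ->
    Rabs (f1 y - f1 x0) < e1 /\ Rabs (f2 y - f2 x0) < e2 /\ Rabs (f3 y - f3 x0) < e3.
Proof.
  intros C1 C2 C3 H1 H2 H3 Hx.
  destruct (cont_ed f1 x0 C1 e1 H1) as [d1 [Hd1 P1]].
  destruct (cont_ed f2 x0 C2 e2 H2) as [d2 [Hd2 P2]].
  destruct (cont_ed f3 x0 C3 e3 H3) as [d3 [Hd3 P3]].
  exists (Rmin (Rmin d1 d2) (Rmin d3 x0) / 2).
  assert (0 < Rmin (Rmin d1 d2) (Rmin d3 x0)) by (repeat apply Rmin_case; lra).
  pose proof (Rmin_l (Rmin d1 d2) (Rmin d3 x0)). pose proof (Rmin_r (Rmin d1 d2) (Rmin d3 x0)).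
  pose proof (Rmin_l d1 d2). pose proof (Rmin_r d1 d2). pose proof (Rmin_l d3 x0). pose proof (Rmin_r d3 x0).
  split; [lra|split;[lra|]]. intros y Hy. split; [apply P1|split;[apply P2|apply P3]]; lra.
Qed.

Lemma stable_part : c < delta * (b + (N1 K h w) ^ 2) / N1 K h w ->
  locally_asymptotically_stable (fN r K h w a b) (fP b c delta) (N1 K h w) 0.
Proof.
  intros Hcs. set (x := N1 K h w) in *.
  assert (Hx : 0 < x) by (apply N1_pos; auto).
  assert (Hbx : 0 < b + x^2) by (pose proof (pow2_ge_0 x); lra).
  assert (Hq : qq b c delta x < 0).
  { unfold qq. apply (Rmult_lt_compat_r x) in Hcs; auto. unfold Rdiv in Hcs.
    rewrite Rmult_assoc, Rinv_l, Rmult_1_r in Hcs by lra.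
    apply Rlt_minus_l. rewrite Rplus_0_l. apply (Rmult_lt_reg_r (b + x^2)); auto.
    unfold Rdiv. rewrite Rmult_assoc, Rinv_l by lra. lra. }
  pose proof (phi_pos r K h w Hr Hw HwK Hhw) as Hph. fold x in Hph.
  destruct (near3 (phi r K h w) (qq b c delta) (mm a b) x (phi r K h w x / 2) (- qq b c delta x / 2) 1)
    as [rho [Hrho [Hrx Hn]]]; try lra.
  apply cont_phi; auto. apply cont_qq; auto. apply cont_mm; auto.
  set (al := - qq b c delta x / 2). set (be := phi r K h w x / 2).
  set (M := Rabs (mm a b x) + 1).
  apply (lyap_las _ _ x 0 rho (Rmin al be) (1 + M^2/(al*be))); auto.
  apply Rmin_case; unfold al, be; lra.
  assert (0 <= M^2/(al*be)). { apply Rdiv_le_0_compat. apply pow2_ge_0. unfold al, be; nra. } lra.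
  intros N P HN. destruct (Hn N HN) as [E1 [E2 E3]].
  rewrite fN_id, fP_id; auto; [|apply Rabs_le_between in HN; lra].
  fold x. replace (P - 0) with P by ring.
  apply (alg_est _ _ _ _ _ al be M); unfold al, be, M; try lra.
  pose proof (Rabs_pos (mm a b x)); lra.
  apply Rabs_def2 in E1; lra. apply Rabs_def2 in E2; lra.
  pose proof (Rabs_triang_inv (mm a b N) (mm a b x)). pose proof (Rle_abs (mm a b N - mm a b x)). lra.
Qed.
End S.

Section S.
Variables (r K h w a b c delta : R).
Hypotheses (Hr : 0 < r) (HK : 0 < K) (Hh : 0 < h) (Hw : 0 < w) (Ha : 0 < a) (Hb : 0 < b)
  (Hc : 0 < c) (Hd : 0 < delta) (HwK : w < K) (Hhw : h < w).

Lemma J11F : jac11 (fN r K h w a b) (N1 K h w) 0 = - phi r K h w (N1 K h w).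
Proof.
  unfold jac11. apply is_derive_unique. set (x := N1 K h w).
  assert (Hx : 0 < x) by (apply N1_pos; auto).
  apply (is_derive_ext_loc (fun n => -(n - x) * phi r K h w n)).
  - exists (mkposreal x Hx). intros y Hy. change (Rabs (y - x) < x) in Hy.
    apply Rabs_def2 in Hy. cbv beta. rewrite (fN_id r K h w a b HK Hh Hw Hb HwK Hhw y 0) by lra. fold x. rewrite Rmult_0_r, Rminus_0_r. reflexivity.
  - assert (Hp : ex_derive (phi r K h w) x).
    { unfold phi. auto_derive. nra. }
    eapply is_derive_eq.
    apply (is_derive_mult (fun n => -(n - x)) (phi r K h w) x (-1) (Derive (phi r K h w) x)).
    + auto_derive; auto.
    + apply Derive_correct. exact Hp.
    + intros; apply Rmult_comm.
    + unfold plus, mult; simpl. ring.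
Qed.

Lemma J12F : jac12 (fN r K h w a b) (N1 K h w) 0 = - mm a b (N1 K h w).
Proof.
  unfold jac12. apply is_derive_unique. set (x := N1 K h w).
  assert (Hx : 0 < x) by (apply N1_pos; auto).
  assert (0 < b + x^2) by (pose proof (pow2_ge_0 x); lra).
  unfold fN. auto_derive. simpl in *. nra. unfold mm. field. lra.
Qed.

Lemma J11G : jac11 (fP b c delta) (N1 K h w) 0 = 0.
Proof.
  unfold jac11. rewrite (Derive_ext _ (fun _ => 0)). apply Derive_const.
  intros t. unfold fP. unfold Rdiv. ring.
Qed.

Lemma J12G : jac12 (fP b c delta) (N1 K h w) 0 = qq b c delta (N1 K h w).
Proof.
  unfold jac12. rewrite (Derive_ext _ (fun p => p * qq b c delta (N1 K h w))).
  apply is_derive_unique. auto_derive; auto. ring.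
  intros t. apply fP_id; auto.
Qed.

Lemma saddle_part : c > delta * (b + (N1 K h w) ^ 2) / N1 K h w ->
  saddle (fN r K h w a b) (fP b c delta) (N1 K h w) 0.
Proof.
  intros Hcs. set (x := N1 K h w) in *.
  assert (Hx : 0 < x) by (apply N1_pos; auto).
  assert (Hbx : 0 < b + x^2) by (pose proof (pow2_ge_0 x); lra).
  assert (Hq : 0 < qq b c delta x).
  { unfold qq. apply (Rmult_lt_compat_r x) in Hcs; auto. unfold Rdiv in Hcs.
    rewrite Rmult_assoc, Rinv_l, Rmult_1_r in Hcs by lra.
    apply Rlt_Rminus. apply (Rmult_lt_reg_r (b + x^2)); auto.
    unfold Rdiv. rewrite Rmult_assoc, Rinv_l by lra. lra. }
  pose proof (phi_pos r K h w Hr Hw HwK Hhw) as Hph. fold x in Hph.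
  exists (- phi r K h w x), (qq b c delta x). split; [lra|split].
  - exists 1, 0. split; [left; lra|]. unfold x; rewrite J11F, J12F, J11G, J12G. fold x. split; ring.
  - exists (- mm a b x / (qq b c delta x + phi r K h w x)), 1. split; [right; lra|].
    unfold x; rewrite J11F, J12F, J11G, J12G. fold x. split; [field; lra | ring].
Qed.
End S.

Lemma pow2_pos n : 0 < 2 ^ n.
Proof. apply pow_lt; lra. Qed.

Lemma small_pow B e : 0 <= B -> 0 < e -> exists n, B / 2 ^ n < e.
Proof.
  intros HB He. destruct (archimed (B / e)) as [H1 _].
  destruct (Rle_or_lt (IZR (up (B/e))) 0) as [h|h].
  - exists O. simpl. assert (B / e <= 0) by lra.
    assert (B <= 0). { apply (Rmult_le_reg_r (/e)). apply Rinv_0_lt_compat; lra. rewrite Rmult_0_l. exact H. }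
    lra.
  - exists (Z.to_nat (up (B/e))).
    assert (E : INR (Z.to_nat (up (B/e))) = IZR (up (B/e))).
    { rewrite INR_IZR_INZ. rewrite Z2Nat.id. reflexivity. apply le_IZR. lra. }
    pose proof (Rle_pow_lin 1 (Z.to_nat (up (B/e))) ltac:(lra)). replace (1+1) with 2 in H by ring.
    rewrite E in H. pose proof (pow2_pos (Z.to_nat (up (B / e)))).
    apply (Rmult_lt_reg_r (2 ^ Z.to_nat (up (B / e)))); auto. unfold Rdiv. rewrite Rmult_assoc, Rinv_l by lra.
    assert (B < e * IZR (up (B/e))).
    { apply (Rmult_lt_compat_l e) in H1; auto. unfold Rdiv in H1. 
      replace (e * (B * / e)) with B in H1 by (field; lra). exact H1. }
    nra.
Qed.

Lemma zero_of_small z A : 0 <= A -> (forall n, Rabs z <= A / 2 ^ n) -> z = 0.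
Proof.
  intros HA H. destruct (Req_dec z 0) as [h|h]; auto. exfalso.
  assert (0 < Rabs z) by (apply Rabs_pos_lt; auto).
  destruct (small_pow A (Rabs z) HA H0) as [n Hn]. specialize (H n). lra.
Qed.

Definition clampf (t0 T t : R) := Rmin (Rmax t t0) (t0 + T).

Lemma clamp_in t0 T t : 0 <= T -> t0 <= clampf t0 T t <= t0 + T.
Proof. intros. unfold clampf. repeat (apply Rmin_case_strong || apply Rmax_case_strong); intros; lra. Qed.

Lemma clamp_id t0 T t : t0 <= t <= t0 + T -> clampf t0 T t = t.
Proof. intros. unfold clampf. repeat (apply Rmin_case_strong || apply Rmax_case_strong); intros; lra. Qed.

Lemma clamp_idem t0 T t : 0 <= T -> clampf t0 T (clampf t0 T t) = clampf t0 T t.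
Proof. intros. apply clamp_id. apply clamp_in; auto. Qed.

Lemma clamp_lip t0 T u v : Rabs (clampf t0 T u - clampf t0 T v) <= Rabs (u - v).
Proof.
  unfold clampf, Rmin, Rmax. repeat destruct Rle_dec; unfold Rabs; repeat destruct Rcase_abs; lra.
Qed.

Lemma cont_clamp t0 T t : continuous (clampf t0 T) t.
Proof.
  apply ed_cont. intros e He. exists e. split; auto. intros y Hy.
  eapply Rle_lt_trans. apply clamp_lip. exact Hy.
Qed.

Lemma cont_lip2 (F : R -> R -> R) L (f g : R -> R) t : 0 < L ->
  (forall a b a' b', Rabs (F a b - F a' b') <= L * (Rabs (a - a') + Rabs (b - b'))) ->
  continuous f t -> continuous g t -> continuous (fun s => F (f s) (g s)) t.
Proof.
  intros HL HF Cf Cg. apply ed_cont. intros e He.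
  destruct (cont_ed f t Cf (e/(2*L))) as [d1 [Hd1 P1]]. apply Rdiv_lt_0_compat; lra.
  destruct (cont_ed g t Cg (e/(2*L))) as [d2 [Hd2 P2]]. apply Rdiv_lt_0_compat; lra.
  exists (Rmin d1 d2). split. apply Rmin_case; lra.
  intros y Hy. eapply Rle_lt_trans. apply HF.
  assert (Rabs (y - t) < d1) by (eapply Rlt_le_trans; [exact Hy| apply Rmin_l]).
  assert (Rabs (y - t) < d2) by (eapply Rlt_le_trans; [exact Hy| apply Rmin_r]).
  specialize (P1 y H). specialize (P2 y H0).
  replace e with (L * (e/(2*L) + e/(2*L))) by (field; lra).
  apply Rmult_lt_compat_l; lra.
Qed.

Lemma der_RInt (h : R -> R) t0 t : (forall z, continuous h z) ->
  is_derive (fun u => RInt h t0 u) t (h t).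
Proof.
  intros Hc. apply (is_derive_RInt h (fun u => RInt h t0 u) t0 t); auto.
  exists (mkposreal 1 Rlt_0_1). intros y _. apply (RInt_correct (V:=R_CompleteNormedModule)). apply (ex_RInt_continuous (V:=R_CompleteNormedModule)). intros; auto.
Qed.

Lemma cont_RInt_clamp (h : R -> R) x0 t0 T t : (forall z, continuous h z) ->
  continuous (fun u => x0 + RInt h t0 (clampf t0 T u)) t.
Proof.
  intros Hc.
  apply (continuous_comp (clampf t0 T) (fun v => x0 + RInt h t0 v)). apply cont_clamp.
  apply (ex_derive_continuous (K:=R_AbsRing) (V:=R_NormedModule)).
  eexists. apply (is_derive_plus (fun _ => x0) (fun v => RInt h t0 v) _ 0). apply (is_derive_const (K:=R_AbsRing) (V:=R_NormedModule)). apply der_RInt; auto.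
Qed.

Lemma exRI (h : R -> R) a b : (forall z, continuous h z) -> ex_RInt h a b.
Proof. intros. apply (ex_RInt_continuous (V:=R_CompleteNormedModule)). intros; auto. Qed.

Lemma RInt_abs_le (f g : R -> R) a b : a <= b -> (forall z, continuous f z) -> (forall z, continuous g z) ->
  (forall u, a <= u <= b -> Rabs (f u) <= g u) -> Rabs (RInt f a b) <= RInt g a b.
Proof.
  intros Hab Cf Cg H. eapply Rle_trans. apply abs_RInt_le; auto. apply exRI; auto.
  apply RInt_le; auto. 
  apply (ex_RInt_continuous (V:=R_CompleteNormedModule)). intros z _.
  apply (continuous_comp f Rabs). auto. apply continuous_Rabs.
  apply exRI; auto. intros; apply H; lra.
Qed.

Lemma RInt_exp A l t0 s : 0 < l -> RInt (fun u => A * exp (l*(u - t0))) t0 s = A * (exp (l*(s-t0)) - 1) / l.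
Proof.
  intros Hl. apply is_RInt_unique.
  replace (A * (exp (l*(s-t0)) - 1) / l) with (minus ((fun u => A * exp (l*(u - t0)) / l) s) ((fun u => A * exp (l*(u - t0)) / l) t0)).
  apply (is_RInt_derive (fun u => A * exp (l*(u - t0)) / l) (fun u => A * exp (l*(u - t0)))).
  - intros x _. auto_derive; auto. change (x + - t0) with (x - t0). rewrite Rmult_1_r. set (E := exp (l * (x - t0))). field. lra.
  - intros x _. apply (ex_derive_continuous (K:=R_AbsRing) (V:=R_NormedModule)). auto_derive. auto.
  - unfold minus, plus, opp; simpl. replace (t0 - t0) with 0 by ring. rewrite Rmult_0_r, exp_0. field. lra.
Qed.

Section Picard.
Variables (F G : R -> R -> R) (L BF t0 T x0 y0 : R).
Hypotheses (HL : 0 < L) (HT : 0 < T).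
Hypothesis HF : forall a b a' b', Rabs (F a b - F a' b') <= L * (Rabs (a - a') + Rabs (b - b')).
Hypothesis HG : forall a b a' b', Rabs (G a b - G a' b') <= L * (Rabs (a - a') + Rabs (b - b')).
Hypothesis HFb : forall a b, Rabs (F a b) <= BF.
Hypothesis HGb : forall a b, Rabs (G a b) <= BF.

Fixpoint it (n : nat) : (R -> R) * (R -> R) :=
  match n with
  | O => (fun _ => x0, fun _ => y0)
  | S n => (fun t => x0 + RInt (fun s => F (fst (it n) s) (snd (it n) s)) t0 (clampf t0 T t),
            fun t => y0 + RInt (fun s => G (fst (it n) s) (snd (it n) s)) t0 (clampf t0 T t))
  end.

Definition X n := fst (it n).
Definition Y n := snd (it n).

Lemma X_S n t : X (S n) t = x0 + RInt (fun s => F (X n s) (Y n s)) t0 (clampf t0 T t).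
Proof. reflexivity. Qed.
Lemma Y_S n t : Y (S n) t = y0 + RInt (fun s => G (X n s) (Y n s)) t0 (clampf t0 T t).
Proof. reflexivity. Qed.

Lemma cont_XY n : forall t, continuous (X n) t /\ continuous (Y n) t.
Proof.
  induction n; intros t.
  - split; apply continuous_const.
  - split.
    + unfold X; simpl. apply cont_RInt_clamp. intros z. apply (cont_lip2 F L); auto; apply IHn.
    + unfold Y; simpl. apply cont_RInt_clamp. intros z. apply (cont_lip2 G L); auto; apply IHn.
Qed.

Lemma cont_FXY n : forall z, continuous (fun s => F (X n s) (Y n s)) z.
Proof. intros z. apply (cont_lip2 F L); auto; apply cont_XY. Qed.
Lemma cont_GXY n : forall z, continuous (fun s => G (X n s) (Y n s)) z.
Proof. intros z. apply (cont_lip2 G L); auto; apply cont_XY. Qed.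

Lemma XY_clamp n t : X n (clampf t0 T t) = X n t /\ Y n (clampf t0 T t) = Y n t.
Proof.
  destruct n. split; reflexivity.
  rewrite !X_S, !Y_S, clamp_idem by lra. split; reflexivity.
Qed.


Definition Cst := T * (Rabs (F x0 y0) + Rabs (G x0 y0)).
Lemma Cst_pos : 0 <= Cst.
Proof. unfold Cst. pose proof (Rabs_pos (F x0 y0)). pose proof (Rabs_pos (G x0 y0)). nra. Qed.

Lemma diff_S n s : t0 <= s <= t0 + T ->
  X (S (S n)) s - X (S n) s = RInt (fun u => F (X (S n) u) (Y (S n) u) - F (X n u) (Y n u)) t0 s /\ Y (S (S n)) s - Y (S n) s = RInt (fun u => G (X (S n) u) (Y (S n) u) - G (X n u) (Y n u)) t0 s.
Proof.
  intros Hs. rewrite (X_S (S n)), (X_S n), (Y_S (S n)), (Y_S n), clamp_id by auto.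
  split.
  - rewrite (RInt_minus (V:=R_CompleteNormedModule) (fun u => F (X (S n) u) (Y (S n) u)) (fun u => F (X n u) (Y n u))).
    unfold minus, plus, opp; simpl. ring. apply exRI, cont_FXY. apply exRI, cont_FXY.
  - rewrite (RInt_minus (V:=R_CompleteNormedModule) (fun u => G (X (S n) u) (Y (S n) u)) (fun u => G (X n u) (Y n u))).
    unfold minus, plus, opp; simpl. ring. apply exRI, cont_GXY. apply exRI, cont_GXY.
Qed.

Definition Dl n s := Rabs (X (S n) s - X n s) + Rabs (Y (S n) s - Y n s).

Lemma delta_bound n : forall s, t0 <= s <= t0 + T -> Dl n s <= Cst * exp (4*L*(s - t0)) / 2 ^ n.
Proof.
  pose proof Cst_pos as HC.
  induction n; intros s Hs.
  - unfold Dl. simpl. rewrite X_S, Y_S, clamp_id by auto. unfold X, Y; simpl.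
    rewrite !RInt_const. unfold scal; simpl; unfold mult; simpl.
    replace (x0 + (s - t0) * F x0 y0 - x0) with ((s - t0) * F x0 y0) by ring.
    replace (y0 + (s - t0) * G x0 y0 - y0) with ((s - t0) * G x0 y0) by ring.
    rewrite !Rabs_mult, Rabs_right by lra.
    assert (1 <= exp (4 * L * (s - t0))).
    { rewrite <- exp_0. destruct (Req_dec s t0). subst. rewrite Rminus_diag, Rmult_0_r. lra.
      left; apply exp_increasing. nra. }
    unfold Cst. pose proof (Rabs_pos (F x0 y0)). pose proof (Rabs_pos (G x0 y0)).
    rewrite Rdiv_1_r.
    assert ((s - t0) * (Rabs (F x0 y0) + Rabs (G x0 y0)) <= T * (Rabs (F x0 y0) + Rabs (G x0 y0))) by nra.
    assert (0 <= T * (Rabs (F x0 y0) + Rabs (G x0 y0))) by nra.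
    nra.
  - destruct (diff_S n s Hs) as [E1 E2]. unfold Dl. rewrite E1, E2.
    set (A := L * (Cst / 2 ^ n)).
    assert (Hg : forall z, continuous (fun u => A * exp (4*L*(u - t0))) z).
    { intros z. apply (ex_derive_continuous (K:=R_AbsRing) (V:=R_NormedModule)). auto_derive. auto. }
    assert (Hpt : forall u, t0 <= u <= s -> L * Dl n u <= A * exp (4*L*(u - t0))).
    { intros u Hu. specialize (IHn u ltac:(lra)). unfold A.
      replace (L * (Cst / 2 ^ n) * exp (4 * L * (u - t0))) with (L * (Cst * exp (4 * L * (u - t0)) / 2 ^ n)) by (field; apply pow_nonzero; lra).
      apply Rmult_le_compat_l; lra. }
    assert (B1 : Rabs (RInt (fun u => F (X (S n) u) (Y (S n) u) - F (X n u) (Y n u)) t0 s) <= RInt (fun u => A * exp (4*L*(u - t0))) t0 s).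
    { apply RInt_abs_le; auto. lra.
      intros z. apply (continuous_minus (fun u => F (X (S n) u) (Y (S n) u)) (fun u => F (X n u) (Y n u))); apply cont_FXY.
      intros u Hu. eapply Rle_trans. apply HF. apply Hpt; auto. }
    assert (B2 : Rabs (RInt (fun u => G (X (S n) u) (Y (S n) u) - G (X n u) (Y n u)) t0 s) <= RInt (fun u => A * exp (4*L*(u - t0))) t0 s).
    { apply RInt_abs_le; auto. lra.
      intros z. apply (continuous_minus (fun u => G (X (S n) u) (Y (S n) u)) (fun u => G (X n u) (Y n u))); apply cont_GXY.
      intros u Hu. eapply Rle_trans. apply HG. apply Hpt; auto. }
    rewrite (RInt_exp A (4*L) t0 s) in B1, B2 by lra.
    assert (2 * (A * (exp (4 * L * (s - t0)) - 1) / (4 * L)) <= Cst * exp (4 * L * (s - t0)) / 2 ^ S n).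
    { unfold A. simpl. pose proof (pow2_pos n). pose proof (exp_pos (4 * L * (s - t0))).
      replace (2 * (L * (Cst / 2 ^ n) * (exp (4 * L * (s - t0)) - 1) / (4 * L))) with
        (Cst * exp (4 * L * (s - t0)) / (2 * 2 ^ n) - Cst / (2 * 2^n)) by (field; split; lra).
      assert (0 <= Cst / (2 * 2^n)) by (apply Rdiv_le_0_compat; lra). lra. }
    lra.
Qed.

Definition Bc := Cst * exp (4 * L * T).
Lemma Bc_pos : 0 <= Bc.
Proof. unfold Bc. pose proof Cst_pos. pose proof (exp_pos (4*L*T)). nra. Qed.

Lemma Dl_all n t : Dl n t <= Bc / 2 ^ n.
Proof.
  unfold Dl. destruct (XY_clamp (S n) t) as [E1 E2]. destruct (XY_clamp n t) as [E3 E4].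
  rewrite <- E1, <- E2, <- E3, <- E4. fold (Dl n (clampf t0 T t)).
  pose proof (clamp_in t0 T t ltac:(lra)).
  eapply Rle_trans. apply delta_bound; auto. unfold Bc.
  pose proof (pow2_pos n). pose proof Cst_pos.
  unfold Rdiv. apply Rmult_le_compat_r. left; apply Rinv_0_lt_compat; auto.
  apply Rmult_le_compat_l; auto.
  destruct (Req_dec (4 * L * (clampf t0 T t - t0)) (4*L*T)) as [h|h]. rewrite h; lra.
  left; apply exp_increasing. nra.
Qed.

Lemma cauchy_j n j t : Rabs (X (n+j) t - X n t) + Rabs (Y (n+j) t - Y n t) <= 2*Bc/2^n - 2*Bc/2^(n+j).
Proof.
  induction j.
  - rewrite Nat.add_0_r. rewrite !Rminus_diag, Rabs_R0. lra.
  - rewrite Nat.add_succ_r. pose proof (Dl_all (n+j) t). unfold Dl in H.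
    pose proof (Rabs_triang (X (S (n+j)) t - X (n+j) t) (X (n+j) t - X n t)).
    pose proof (Rabs_triang (Y (S (n+j)) t - Y (n+j) t) (Y (n+j) t - Y n t)).
    replace (X (S (n + j)) t - X (n + j) t + (X (n + j) t - X n t)) with (X (S (n+j)) t - X n t) in H0 by ring.
    replace (Y (S (n + j)) t - Y (n + j) t + (Y (n + j) t - Y n t)) with (Y (S (n+j)) t - Y n t) in H1 by ring.
    assert (2 * Bc / 2 ^ S (n+j) = Bc / 2^(n+j)) by (simpl; field; apply pow_nonzero; lra).
    lra.
Qed.

Lemma cauchy_m n m t : (n <= m)%nat -> Rabs (X m t - X n t) <= 2*Bc/2^n /\ Rabs (Y m t - Y n t) <= 2*Bc/2^n.
Proof.
  intros Hnm. replace m with (n + (m - n))%nat by lia. pose proof (cauchy_j n (m-n) t).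
  assert (0 <= 2 * Bc / 2 ^ (n + (m - n))) by (pose proof Bc_pos; pose proof (pow2_pos (n + (m-n))); apply Rdiv_le_0_compat; lra).
  pose proof (Rabs_pos (X (n + (m - n)) t - X n t)). pose proof (Rabs_pos (Y (n + (m - n)) t - Y n t)).
  split; lra.
Qed.

Lemma cauchy_seq (u : nat -> R) A : 0 <= A -> (forall n m, (n <= m)%nat -> Rabs (u m - u n) <= A / 2^n) ->
  ex_finite_lim_seq u.
Proof.
  intros HA H. apply ex_lim_seq_cauchy_corr. intros [e He]. simpl.
  destruct (small_pow (2*A) e ltac:(lra) He) as [N HN]. exists N. intros n m Hn Hm.
  pose proof (H N n Hn). pose proof (H N m Hm).
  pose proof (Rabs_triang (u n - u N) (u N - u m)). replace (u n - u N + (u N - u m)) with (u n - u m) in H2 by ring.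
  rewrite <- Rabs_Ropp in H1. replace (- (u m - u N)) with (u N - u m) in H1 by ring.
  replace (2 * A / 2^N) with (A/2^N + A/2^N) in HN by (field; apply pow_nonzero; lra). lra.
Qed.

Lemma lim_close (u : nat -> R) A : (forall n m, (n <= m)%nat -> Rabs (u m - u n) <= A / 2^n) ->
  ex_finite_lim_seq u -> forall n, Rabs (real (Lim_seq u) - u n) <= A / 2^n.
Proof.
  intros H Hex n. pose proof (Lim_seq_correct' u Hex) as Hl. apply is_lim_seq_spec in Hl.
  set (l := real (Lim_seq u)) in *.
  destruct (Rle_or_lt (Rabs (l - u n)) (A/2^n)) as [h|h]; auto. exfalso.
  destruct (Hl (mkposreal _ (Rlt_Rminus _ _ h))) as [N HN]. simpl in HN.
  specialize (HN (Nat.max N n) (Nat.le_max_l _ _)). specialize (H n (Nat.max N n) (Nat.le_max_r _ _)).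
  pose proof (Rabs_triang (l - u (Nat.max N n)) (u (Nat.max N n) - u n)).
  replace (l - u (Nat.max N n) + (u (Nat.max N n) - u n)) with (l - u n) in H0 by ring.
  rewrite <- Rabs_Ropp in HN. replace (- (u (Nat.max N n) - l)) with (l - u (Nat.max N n)) in HN by ring.
  lra.
Qed.

Definition Xs t := real (Lim_seq (fun n => X n t)).
Definition Ys t := real (Lim_seq (fun n => Y n t)).

Lemma Xs_close n t : Rabs (Xs t - X n t) <= 2*Bc/2^n.
Proof.
  pose proof Bc_pos.
  assert (Hc : forall n m, (n <= m)%nat -> Rabs (X m t - X n t) <= (2*Bc)/2^n) by (intros; apply cauchy_m; auto).
  apply (lim_close (fun n => X n t) (2*Bc)); auto. apply (cauchy_seq _ (2*Bc)); auto; lra.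
Qed.
Lemma Ys_close n t : Rabs (Ys t - Y n t) <= 2*Bc/2^n.
Proof.
  pose proof Bc_pos.
  assert (Hc : forall n m, (n <= m)%nat -> Rabs (Y m t - Y n t) <= (2*Bc)/2^n) by (intros; apply cauchy_m; auto).
  apply (lim_close (fun n => Y n t) (2*Bc)); auto. apply (cauchy_seq _ (2*Bc)); auto; lra.
Qed.

Lemma unif_cont (f : R -> R) (g : nat -> R -> R) A t : 0 <= A ->
  (forall n u, Rabs (f u - g n u) <= A / 2^n) -> (forall n, continuous (g n) t) -> continuous f t.
Proof.
  intros HA Hc Hg. apply ed_cont. intros e He.
  destruct (small_pow (3*A) e ltac:(lra) He) as [n Hn].
  destruct (cont_ed (g n) t (Hg n) (e/3)) as [d [Hd Hd']]. lra.
  exists d. split; auto. intros y Hy. specialize (Hd' y Hy).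
  pose proof (Hc n y). pose proof (Hc n t).
  pose proof (Rabs_triang (f y - g n y) (g n y - f t)).
  pose proof (Rabs_triang (g n y - g n t) (g n t - f t)).
  rewrite <- Rabs_Ropp in H0. replace (- (f t - g n t)) with (g n t - f t) in H0 by ring.
  replace (f y - g n y + (g n y - f t)) with (f y - f t) in H1 by ring.
  replace (g n y - g n t + (g n t - f t)) with (g n y - f t) in H2 by ring.
  replace (3 * A / 2^n) with (A/2^n + A/2^n + A/2^n) in Hn by (field; apply pow_nonzero; lra).
  lra.
Qed.

Lemma cont_Xs t : continuous Xs t.
Proof. apply (unif_cont Xs X (2*Bc)). pose proof Bc_pos; lra. intros; apply Xs_close. intros; apply cont_XY. Qed.
Lemma cont_Ys t : continuous Ys t.
Proof. apply (unif_cont Ys Y (2*Bc)). pose proof Bc_pos; lra. intros; apply Ys_close. intros; apply cont_XY. Qed.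

Lemma cont_FXs z : continuous (fun s => F (Xs s) (Ys s)) z.
Proof. apply (cont_lip2 F L); auto. apply cont_Xs. apply cont_Ys. Qed.
Lemma cont_GXs z : continuous (fun s => G (Xs s) (Ys s)) z.
Proof. apply (cont_lip2 G L); auto. apply cont_Xs. apply cont_Ys. Qed.

Lemma int_eq_gen (Fc : R -> R -> R) (Z : nat -> R -> R) (Zs : R -> R) z0 t :
  (forall a b a' b', Rabs (Fc a b - Fc a' b') <= L * (Rabs (a - a') + Rabs (b - b'))) ->
  (forall n, Z (S n) t = z0 + RInt (fun s => Fc (X n s) (Y n s)) t0 (clampf t0 T t)) ->
  (forall n, forall z, continuous (fun s => Fc (X n s) (Y n s)) z) ->
  (forall z, continuous (fun s => Fc (Xs s) (Ys s)) z) ->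
  (forall n, Rabs (Zs t - Z n t) <= 2*Bc/2^n) ->
  Zs t = z0 + RInt (fun s => Fc (Xs s) (Ys s)) t0 (clampf t0 T t).
Proof.
  intros HFc HZ Cn Cs Hclose.
  set (ct := clampf t0 T t). pose proof (clamp_in t0 T t ltac:(lra)) as Hct. fold ct in Hct.
  pose proof Bc_pos as HB.
  assert (Zs t - z0 - RInt (fun s => Fc (Xs s) (Ys s)) t0 ct = 0); [|lra].
  apply (zero_of_small _ (Bc + T*L*(4*Bc))). assert (0 <= T*L) by (apply Rmult_le_pos; lra). apply Rplus_le_le_0_compat; auto. apply Rmult_le_pos; auto. lra.
  intros n. specialize (HZ n). fold ct in HZ.
  assert (E : Zs t - z0 - RInt (fun s => Fc (Xs s) (Ys s)) t0 ct =
     (Zs t - Z (S n) t) + RInt (fun s => Fc (X n s) (Y n s) - Fc (Xs s) (Ys s)) t0 ct).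
  { rewrite (RInt_minus (V:=R_CompleteNormedModule) (fun s => Fc (X n s) (Y n s)) (fun s => Fc (Xs s) (Ys s))).
    unfold minus, plus, opp; simpl. rewrite HZ. ring. apply exRI; auto. apply exRI; auto. }
  rewrite E. eapply Rle_trans. apply Rabs_triang.
  assert (H1 : Rabs (Zs t - Z (S n) t) <= Bc / 2^n).
  { eapply Rle_trans. apply Hclose. simpl. right. field. apply pow_nonzero; lra. }
  assert (H2 : Rabs (RInt (fun s => Fc (X n s) (Y n s) - Fc (Xs s) (Ys s)) t0 ct) <= (ct - t0) * (L * (4*Bc/2^n))).
  { apply abs_RInt_le_const. lra. apply exRI. intros z.
    apply (continuous_minus (fun s => Fc (X n s) (Y n s)) (fun s => Fc (Xs s) (Ys s))); auto.
    intros u Hu. eapply Rle_trans. apply HFc. apply Rmult_le_compat_l. lra.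
    pose proof (Xs_close n u). pose proof (Ys_close n u).
    rewrite <- Rabs_Ropp in H, H0. replace (- (Xs u - X n u)) with (X n u - Xs u) in H by ring.
    replace (- (Ys u - Y n u)) with (Y n u - Ys u) in H0 by ring.
    replace (4 * Bc / 2^n) with (2*Bc/2^n + 2*Bc/2^n) by (field; apply pow_nonzero; lra). lra. }
  assert ((ct - t0) * (L * (4*Bc/2^n)) <= T*L*(4*Bc)/2^n).
  { pose proof (pow2_pos n). assert (0 <= L * (4*Bc/2^n)) by (apply Rmult_le_pos; [lra| apply Rdiv_le_0_compat; lra]).
    replace (T*L*(4*Bc)/2^n) with (T * (L * (4*Bc/2^n))) by (field; lra). apply Rmult_le_compat_r; lra. }
  replace ((Bc + T * L * (4 * Bc)) / 2 ^ n) with (Bc/2^n + T*L*(4*Bc)/2^n) by (field; apply pow_nonzero; lra).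
  lra.
Qed.

Lemma Xs_eq t : Xs t = x0 + RInt (fun s => F (Xs s) (Ys s)) t0 (clampf t0 T t).
Proof. exact (int_eq_gen F X Xs x0 t HF (fun n => X_S n t) cont_FXY cont_FXs (fun n => Xs_close n t)). Qed.
Lemma Ys_eq t : Ys t = y0 + RInt (fun s => G (Xs s) (Ys s)) t0 (clampf t0 T t).
Proof. exact (int_eq_gen G Y Ys y0 t HG (fun n => Y_S n t) cont_GXY cont_GXs (fun n => Ys_close n t)). Qed.

Lemma der_gen (Zs : R -> R) (h : R -> R) z0 t : t0 < t < t0 + T ->
  (forall z, continuous h z) -> (forall u, Zs u = z0 + RInt h t0 (clampf t0 T u)) -> is_derive Zs t (h t).
Proof.
  intros Ht Hc HZ.
  apply (is_derive_ext_loc (fun u => z0 + RInt h t0 u)).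
  - assert (Hd : 0 < Rmin (t - t0) (t0 + T - t)) by (apply Rmin_case; lra).
    exists (mkposreal _ Hd). intros y Hy. change (Rabs (y - t) < Rmin (t - t0) (t0 + T - t)) in Hy.
    pose proof (Rmin_l (t - t0) (t0 + T - t)). pose proof (Rmin_r (t - t0) (t0 + T - t)).
    apply Rabs_def2 in Hy. rewrite HZ, clamp_id. reflexivity. lra.
  - eapply is_derive_eq. apply (is_derive_plus (fun _ => z0) (fun v => RInt h t0 v) _ 0).
    apply (is_derive_const (K:=R_AbsRing) (V:=R_NormedModule)). apply der_RInt; auto.
    unfold plus; simpl. ring.
Qed.

Lemma bound_gen (Zs : R -> R) (h : R -> R) z0 t : t0 <= t <= t0 + T ->
  (forall z, continuous h z) -> (forall u, Rabs (h u) <= BF) ->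
  (forall u, Zs u = z0 + RInt h t0 (clampf t0 T u)) -> Rabs (Zs t - z0) <= (t - t0) * BF.
Proof.
  intros Ht Hc Hb HZ. rewrite HZ, clamp_id by auto. unfold Rminus. rewrite Rplus_comm, <- Rplus_assoc, (Rplus_comm (- z0)), Rplus_opp_r, Rplus_0_l.
  apply abs_RInt_le_const. lra. apply exRI; auto. intros; auto.
Qed.

End Picard.

Lemma picard (F G : R -> R -> R) (L BF t0 T x0 y0 : R) : 0 < L -> 0 < T ->
  (forall a b a' b', Rabs (F a b - F a' b') <= L * (Rabs (a - a') + Rabs (b - b'))) ->
  (forall a b a' b', Rabs (G a b - G a' b') <= L * (Rabs (a - a') + Rabs (b - b'))) ->
  (forall a b, Rabs (F a b) <= BF) -> (forall a b, Rabs (G a b) <= BF) ->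
  exists N P : R -> R,
    (forall t, t0 < t < t0 + T -> is_derive N t (F (N t) (P t)) /\ is_derive P t (G (N t) (P t))) /\
    (forall t, t0 <= t <= t0 + T -> Rabs (N t - x0) <= (t - t0) * BF /\ Rabs (P t - y0) <= (t - t0) * BF).
Proof.
  intros HL HT HF HG HFb HGb.
  pose proof (cont_FXs F G L t0 T x0 y0 HL HT HF HG) as C1.
  pose proof (cont_GXs F G L t0 T x0 y0 HL HT HF HG) as C2.
  pose proof (Xs_eq F G L t0 T x0 y0 HL HT HF HG) as E1.
  pose proof (Ys_eq F G L t0 T x0 y0 HL HT HF HG) as E2.
  exists (Xs F G t0 T x0 y0), (Ys F G t0 T x0 y0). split.
  - intros t Ht. split.
    + exact (der_gen t0 T _ _ x0 t Ht C1 E1).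
    + exact (der_gen t0 T _ _ y0 t Ht C2 E2).
  - intros t Ht. split.
    + exact (bound_gen BF t0 T _ _ x0 t Ht C1 (fun u => HFb _ _) E1).
    + exact (bound_gen BF t0 T _ _ y0 t Ht C2 (fun u => HGb _ _) E2).
Qed.

Section Box.
Variables (l1 u1 l2 u2 : R).
Definition inbox a b := l1 <= a <= u1 /\ l2 <= b <= u2.
Definition LB (f : R -> R -> R) := exists L B, 0 <= L /\ forall a b a' b', inbox a b -> inbox a' b' ->
  Rabs (f a b - f a' b') <= L * (Rabs (a - a') + Rabs (b - b')) /\ Rabs (f a b) <= B.

Lemma LB_const c : LB (fun _ _ => c).
Proof. exists 0, (Rabs c). split. lra. intros. rewrite Rminus_diag, Rabs_R0. split; [|lra].
  rewrite Rmult_0_l; lra. Qed.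

Lemma LB_p1 : LB (fun a _ => a).
Proof. exists 1, (Rabs l1 + Rabs u1). split. lra. intros a b a' b' [Ha _] [Ha' _]. split.
  pose proof (Rabs_pos (b - b')). lra.
  unfold Rabs; repeat destruct Rcase_abs; lra. Qed.

Lemma LB_p2 : LB (fun _ b => b).
Proof. exists 1, (Rabs l2 + Rabs u2). split. lra. intros a b a' b' [_ Hb] [_ Hb']. split.
  pose proof (Rabs_pos (a - a')). lra.
  unfold Rabs; repeat destruct Rcase_abs; lra. Qed.

Lemma LB_plus f g : LB f -> LB g -> LB (fun a b => f a b + g a b).
Proof.
  intros [L1 [B1 [HL1 H1]]] [L2 [B2 [HL2 H2]]]. exists (L1 + L2), (B1 + B2). split. lra.
  intros a b a' b' Hi Hi'. destruct (H1 a b a' b' Hi Hi') as [A1 A2]. destruct (H2 a b a' b' Hi Hi') as [A3 A4].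
  split.
  - replace (f a b + g a b - (f a' b' + g a' b')) with ((f a b - f a' b') + (g a b - g a' b')) by ring.
    eapply Rle_trans. apply Rabs_triang. lra.
  - eapply Rle_trans. apply Rabs_triang. lra.
Qed.

Lemma LB_opp f : LB f -> LB (fun a b => - f a b).
Proof.
  intros [L1 [B1 [HL1 H1]]]. exists L1, B1. split. lra.
  intros a b a' b' Hi Hi'. destruct (H1 a b a' b' Hi Hi') as [A1 A2]. split.
  - replace (- f a b - - f a' b') with (- (f a b - f a' b')) by ring. rewrite Rabs_Ropp. lra.
  - rewrite Rabs_Ropp. lra.
Qed.

Lemma LB_minus f g : LB f -> LB g -> LB (fun a b => f a b - g a b).
Proof. intros. unfold Rminus. apply LB_plus; auto. apply LB_opp; auto. Qed.

Lemma LB_mult f g : LB f -> LB g -> LB (fun a b => f a b * g a b).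
Proof.
  intros [L1 [B1 [HL1 H1]]] [L2 [B2 [HL2 H2]]].
  exists (Rabs B1 * L2 + Rabs B2 * L1), (Rabs B1 * Rabs B2). split.
  pose proof (Rabs_pos B1); pose proof (Rabs_pos B2). nra.
  intros a b a' b' Hi Hi'. destruct (H1 a b a' b' Hi Hi') as [A1 A2]. destruct (H2 a b a' b' Hi Hi') as [A3 A4].
  destruct (H2 a' b' a' b' Hi' Hi') as [_ A5].
  assert (Rabs (f a b) <= Rabs B1) by (pose proof (Rle_abs B1); lra).
  assert (Rabs (g a' b') <= Rabs B2) by (pose proof (Rle_abs B2); lra).
  assert (Rabs (g a b) <= Rabs B2) by (pose proof (Rle_abs B2); lra).
  split.
  - replace (f a b * g a b - f a' b' * g a' b') with (f a b * (g a b - g a' b') + (f a b - f a' b') * g a' b') by ring.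
    eapply Rle_trans. apply Rabs_triang. rewrite !Rabs_mult.
    set (D := Rabs (a - a') + Rabs (b - b')).
    assert (0 <= D) by (unfold D; pose proof (Rabs_pos (a-a')); pose proof (Rabs_pos (b-b')); lra).
    pose proof (Rabs_pos (f a b)). pose proof (Rabs_pos (g a b - g a' b')).
    pose proof (Rabs_pos (f a b - f a' b')). pose proof (Rabs_pos (g a' b')).
    assert (Rabs (f a b) * Rabs (g a b - g a' b') <= Rabs B1 * (L2 * D)) by (apply Rmult_le_compat; auto).
    assert (Rabs (f a b - f a' b') * Rabs (g a' b') <= (L1 * D) * Rabs B2) by (apply Rmult_le_compat; auto).
    nra.
  - rewrite Rabs_mult. apply Rmult_le_compat; auto; apply Rabs_pos.
Qed.

Lemma LB_inv g m : 0 < m -> LB g -> (forall a b, inbox a b -> m <= g a b) -> LB (fun a b => / g a b).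
Proof.
  intros Hm [L1 [B1 [HL1 H1]]] Hg. exists (L1 / (m*m)), (/ m). split. apply Rdiv_le_0_compat; nra.
  intros a b a' b' Hi Hi'. destruct (H1 a b a' b' Hi Hi') as [A1 A2].
  pose proof (Hg a b Hi). pose proof (Hg a' b' Hi'). split.
  - replace (/ g a b - / g a' b') with ((g a' b' - g a b) / (g a b * g a' b')) by (field; lra).
    unfold Rdiv. rewrite Rabs_mult. rewrite Rabs_inv. rewrite (Rabs_right (g a b * g a' b')) by nra.
    rewrite <- Rabs_Ropp. replace (- (g a' b' - g a b)) with (g a b - g a' b') by ring.
    set (D := Rabs (a - a') + Rabs (b - b')) in *.
    assert (0 <= D) by (unfold D; pose proof (Rabs_pos (a-a')); pose proof (Rabs_pos (b-b')); lra).
    assert (/ (g a b * g a' b') <= / (m*m)) by (apply Rinv_le_contravar; nra).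
    assert (0 < / (g a b * g a' b')) by (apply Rinv_0_lt_compat; nra).
    pose proof (Rabs_pos (g a b - g a' b')).
    replace (L1 * / (m*m) * D) with ((L1 * D) * / (m*m)) by ring.
    apply Rmult_le_compat; auto. lra.
  - rewrite Rabs_inv. rewrite Rabs_right by lra. apply Rinv_le_contravar; lra.
Qed.

Lemma LB_div f g m : 0 < m -> LB f -> LB g -> (forall a b, inbox a b -> m <= g a b) -> LB (fun a b => f a b / g a b).
Proof. intros. unfold Rdiv. apply LB_mult; auto. eapply LB_inv; eauto. Qed.

Lemma LB_clamp f : l1 <= u1 -> l2 <= u2 -> LB f -> exists L B, 0 < L /\
  (forall a b a' b', Rabs (f (clampf l1 (u1 - l1) a) (clampf l2 (u2 - l2) b) - f (clampf l1 (u1 - l1) a') (clampf l2 (u2 - l2) b'))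
     <= L * (Rabs (a - a') + Rabs (b - b'))) /\
  (forall a b, Rabs (f (clampf l1 (u1 - l1) a) (clampf l2 (u2 - l2) b)) <= B).
Proof.
  intros H1 H2 [L [B [HL Hf]]]. exists (L + 1), B. 
  assert (Hin : forall a b, inbox (clampf l1 (u1 - l1) a) (clampf l2 (u2 - l2) b)).
  { intros. split. pose proof (clamp_in l1 (u1 - l1) a ltac:(lra)). lra. pose proof (clamp_in l2 (u2 - l2) b ltac:(lra)). lra. }
  split; [lra|split].
  - intros. destruct (Hf _ _ _ _ (Hin a b) (Hin a' b')) as [A _]. eapply Rle_trans. apply A.
    pose proof (clamp_lip l1 (u1 - l1) a a'). pose proof (clamp_lip l2 (u2 - l2) b b').
    pose proof (Rabs_pos (a - a')). pose proof (Rabs_pos (b - b')).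
    pose proof (Rabs_pos (clampf l1 (u1 - l1) a - clampf l1 (u1 - l1) a')).
    pose proof (Rabs_pos (clampf l2 (u2 - l2) b - clampf l2 (u2 - l2) b')). nra.
  - intros. destruct (Hf _ _ _ _ (Hin a b) (Hin a b)) as [_ A]. exact A.
Qed.
End Box.

Lemma mono_inc (f df : R -> R) a b : a <= b ->
  (forall t, a <= t <= b -> is_derive f t (df t)) ->
  (forall t, a <= t <= b -> 0 <= df t) -> f a <= f b.
Proof.
  intros Hab Hd Hpos.
  destruct (MVT_gen f a b df) as [c [Hc Heq]].
  - intros x Hx. rewrite Rmin_left in Hx by lra. rewrite Rmax_right in Hx by lra. apply Hd; lra.
  - intros x Hx. rewrite Rmin_left in Hx by lra. rewrite Rmax_right in Hx by lra.
    apply continuity_pt_filterlim. apply (ex_derive_continuous (K:=R_AbsRing) (V:=R_NormedModule) f x). eexists. apply Hd; lra.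
  - rewrite Rmin_left in Hc by lra. rewrite Rmax_right in Hc by lra.
    specialize (Hpos c Hc). assert (0 <= df c * (b - a)) by (apply Rmult_le_pos; lra). lra.
Qed.

Section U.
Variables (r K h w a b c delta : R).
Hypotheses (Hr : 0 < r) (HK : 0 < K) (Hh : 0 < h) (Hw : 0 < w) (Ha : 0 < a) (Hb : 0 < b)
  (Hc : 0 < c) (Hd : 0 < delta) (HwK : w < K) (Hhw : h < w).

Lemma LB_sq l1 u1 l2 u2 : LB l1 u1 l2 u2 (fun x _ => x ^ 2).
Proof. exact (LB_mult _ _ _ _ _ _ (LB_p1 l1 u1 l2 u2) (LB_mult _ _ _ _ _ _ (LB_p1 l1 u1 l2 u2) (LB_const l1 u1 l2 u2 1))). Qed.

Lemma LB_fN u1 l2 u2 : LB 0 u1 l2 u2 (fN r K h w a b).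
Proof.
  unfold fN.
  apply LB_minus.
  - apply LB_mult. apply LB_mult. apply LB_const. apply LB_p1.
    apply LB_minus. apply LB_minus. apply LB_const. apply (LB_div _ _ _ _ _ _ K); auto. apply LB_p1. apply LB_const.
    intros; lra.
    apply (LB_div _ _ _ _ _ _ w); auto. apply LB_const. apply LB_plus. apply LB_const. apply LB_p1.
    intros x y [Hx _]; lra.
  - apply (LB_div _ _ _ _ _ _ b); auto. apply LB_mult. apply LB_mult. apply LB_const. apply LB_p1. apply LB_p2.
    apply LB_plus. apply LB_const. apply LB_sq. intros x y _. pose proof (pow2_ge_0 x). lra.
Qed.

Lemma LB_fP u1 l2 u2 : LB 0 u1 l2 u2 (fP b c delta).
Proof.
  unfold fP.
  apply LB_minus.
  - apply (LB_div _ _ _ _ _ _ b); auto. apply LB_mult. apply LB_mult. apply LB_const. apply LB_p1. apply LB_p2.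
    apply LB_plus. apply LB_const. apply LB_sq. intros x y _. pose proof (pow2_ge_0 x). lra.
  - apply LB_mult. apply LB_const. apply LB_p2.
Qed.

End U.

Lemma cont_neg (f : R -> R) t : continuous f t -> continuous (fun u => - f u) t.
Proof.
  intros Hc. apply ed_cont. intros e He. destruct (cont_ed f t Hc e He) as [d [Hd H]].
  exists d. split; auto. intros y Hy. replace (- f y - - f t) with (- (f y - f t)) by ring.
  rewrite Rabs_Ropp. auto.
Qed.

Section U2.
Variables (r K h w a b c delta : R).
Hypotheses (Hr : 0 < r) (HK : 0 < K) (Hh : 0 < h) (Hw : 0 < w) (Ha : 0 < a) (Hb : 0 < b)
  (Hc : 0 < c) (Hd : 0 < delta) (HwK : w < K) (Hhw : h < w).

Lemma unstable_part : c > delta * (b + (N1 K h w) ^ 2) / N1 K h w ->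
  unstable (fN r K h w a b) (fP b c delta) (N1 K h w) 0.
Proof.
  intros Hcs Hstab. set (x := N1 K h w) in *.
  assert (Hx : 0 < x) by (apply N1_pos; auto).
  assert (Hbx : 0 < b + x^2) by (pose proof (pow2_ge_0 x); lra).
  assert (Hq : 0 < qq b c delta x).
  { unfold qq. apply (Rmult_lt_compat_r x) in Hcs; auto. unfold Rdiv in Hcs.
    rewrite Rmult_assoc, Rinv_l, Rmult_1_r in Hcs by lra.
    apply Rlt_Rminus. apply (Rmult_lt_reg_r (b + x^2)); auto.
    unfold Rdiv. rewrite Rmult_assoc, Rinv_l by lra. lra. }
  destruct (cont_ed (qq b c delta) x (cont_qq K h w b c delta Hb) (qq b c delta x / 2)) as [rq [Hrq Hq']]. lra.
  set (al := qq b c delta x / 2).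
  assert (Hal : 0 < al) by (unfold al; lra).
  set (eps := Rmin rq x / 2).
  assert (He0 : 0 < eps) by (unfold eps; apply Rmin_case; lra).
  assert (He1 : eps < rq) by (unfold eps; pose proof (Rmin_l rq x); lra).
  assert (He2 : eps <= x / 2) by (unfold eps; pose proof (Rmin_r rq x); lra).
  destruct (Hstab eps He0) as [d [Hd0 Hdd]].
  destruct (LB_clamp 0 (2*x) (-x) x (fN r K h w a b) ltac:(lra) ltac:(lra) (LB_fN r K h w a b HK Hw Hb (2*x) (-x) x))
    as [L1 [B1 [HL1 [Hl1 Hb1]]]].
  destruct (LB_clamp 0 (2*x) (-x) x (fP b c delta) ltac:(lra) ltac:(lra) (LB_fP b c delta Hb (2*x) (-x) x))
    as [L2 [B2 [HL2 [Hl2 Hb2]]]].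
  set (Ft := fun a0 b0 => fN r K h w a b (clampf 0 (2*x - 0) a0) (clampf (-x) (x - -x) b0)).
  set (Gt := fun a0 b0 => fP b c delta (clampf 0 (2*x - 0) a0) (clampf (-x) (x - -x) b0)).
  set (L := L1 + L2). set (BF := Rabs B1 + Rabs B2).
  assert (HBF : 0 <= BF) by (unfold BF; pose proof (Rabs_pos B1); pose proof (Rabs_pos B2); lra).
  set (p := Rmin d eps / 2).
  assert (Hp0 : 0 < p) by (unfold p; apply Rmin_case; lra).
  assert (Hpd : 2 * p <= d) by (unfold p; pose proof (Rmin_l d eps); lra).
  assert (Hpe : 2 * p <= eps) by (unfold p; pose proof (Rmin_r d eps); lra).
  set (T := ln (4 * eps / p) / al + 1).
  assert (H4 : 0 < 4 * eps / p) by (apply Rdiv_lt_0_compat; lra).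
  assert (Hln : 0 < ln (4 * eps / p)).
  { rewrite <- ln_1. apply ln_increasing. lra. apply (Rmult_lt_reg_r p); auto. unfold Rdiv.
    rewrite Rmult_assoc, Rinv_l, Rmult_1_r by lra. lra. }
  assert (HT : 0 < T) by (unfold T; assert (0 < ln (4 * eps / p) / al) by (apply Rdiv_lt_0_compat; lra); lra).
  assert (HexpT : 4 * eps / p < exp (al * T)).
  { rewrite <- (exp_ln (4 * eps / p)) at 1 by auto. apply exp_increasing. unfold T.
    replace (al * (ln (4 * eps / p) / al + 1)) with (ln (4 * eps / p) + al) by (field; lra). lra. }
  set (tau := p / (4 * (BF + 1))).
  assert (Htau : 0 < tau) by (unfold tau; apply Rdiv_lt_0_compat; lra).
  assert (HtauB : tau * BF < p / 4).
  { unfold tau. replace (p / (4 * (BF + 1)) * BF) with (p / 4 * (BF / (BF + 1))) by (field; lra).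
    assert (BF / (BF + 1) < 1). { apply (Rmult_lt_reg_r (BF + 1)). lra. unfold Rdiv.
      rewrite Rmult_assoc, Rinv_l by lra. lra. }
    assert (0 < p / 4) by lra. nra. }
  destruct (picard Ft Gt L BF (- tau) (tau + T + 1) x p) as [N [P [Hder Hbd]]].
  { unfold L; lra. }
  { lra. }
  { intros. eapply Rle_trans. apply Hl1. pose proof (Rabs_pos (a0 - a')). pose proof (Rabs_pos (b0 - b')). unfold L; nra. }
  { intros. eapply Rle_trans. apply Hl2. pose proof (Rabs_pos (a0 - a')). pose proof (Rabs_pos (b0 - b')). unfold L; nra. }
  { intros. eapply Rle_trans. apply Hb1. unfold BF. pose proof (Rle_abs B1). pose proof (Rabs_pos B2). lra. }
  { intros. eapply Rle_trans. apply Hb2. unfold BF. pose proof (Rle_abs B2). pose proof (Rabs_pos B1). lra. }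
  assert (Hagree : forall a0 b0, Rabs (a0 - x) <= eps -> Rabs b0 <= eps -> Ft a0 b0 = fN r K h w a b a0 b0 /\ Gt a0 b0 = fP b c delta a0 b0).
  { intros a0 b0 H1 H2. apply Rabs_le_between in H1. apply Rabs_le_between in H2.
    unfold Ft, Gt. rewrite !clamp_id by lra. split; reflexivity. }
  destruct (Hbd 0) as [B0N B0P]. lra.
  replace (0 - - tau) with tau in B0N, B0P by ring.
  apply Rabs_le_between in B0N. apply Rabs_le_between in B0P.
  set (S := fun t => (N t - x)^2 + 1*(P t - 0)^2).
  assert (HdS : forall t, 0 <= t <= T -> is_derive S t (2*(N t - x)*Ft (N t) (P t) + 1*(2*(P t - 0)*Gt (N t) (P t)))).
  { intros t Ht. destruct (Hder t) as [D1 D2]. lra. apply is_derive_V; auto. }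
  assert (Hdist0 : dist2 (N 0) (P 0) x 0 < d).
  { apply (Rlt_le_trans _ (2*p)); [|lra]. apply lt_dist2. lra. nra. }
  assert (Hgen : forall s, 0 <= s <= T -> (forall u, 0 <= u <= s -> S u <= eps^2) -> is_solution_on (fN r K h w a b) (fP b c delta) s N P).
  { intros s Hs Hle u Hu. specialize (Hle u Hu). unfold S in Hle.
    pose proof (pow2_ge_0 (N u - x)). pose proof (pow2_ge_0 (P u - 0)).
    assert (A1 : Rabs (N u - x) <= eps) by (apply abs_of_sq; lra).
    assert (A2 : Rabs (P u - 0) <= eps) by (apply abs_of_sq; lra).
    rewrite Rminus_0_r in A2.
    destruct (Hagree (N u) (P u) A1 A2) as [E1 E2]. destruct (Hder u) as [D1 D2]. lra.
    rewrite <- E1, <- E2. auto. }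
  assert (HS : forall t, 0 <= t <= T -> S t < eps^2).
  { apply cont_ind.
    - intros t Ht. eapply cont_of_der. apply HdS; auto.
    - unfold S. nra.
    - intros s Hs Hle. pose proof (Hdd s N P (Hgen s Hs Hle) Hdist0 s ltac:(lra)) as Hds.
      apply dist2_lt in Hds; auto. unfold S. lra. }
  assert (Hsol : is_solution_on (fN r K h w a b) (fP b c delta) T N P).
  { apply Hgen. lra. intros u Hu. left. apply HS; auto. }
  assert (Hreg : forall t, 0 <= t <= T -> al < qq b c delta (N t) /\ Rabs (P t) < eps).
  { intros t Ht. specialize (HS t Ht). unfold S in HS.
    pose proof (pow2_ge_0 (N t - x)). pose proof (pow2_ge_0 (P t - 0)).
    assert (A1 : Rabs (N t - x) < eps) by (apply abs_of_sq_lt; lra).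
    assert (A2 : Rabs (P t - 0) < eps) by (apply abs_of_sq_lt; lra).
    rewrite Rminus_0_r in A2. split; auto.
    specialize (Hq' (N t) ltac:(lra)). apply Rabs_def2 in Hq'. unfold al. lra. }
  set (Z := fun t => P t * exp ((- al) * t)).
  assert (HdZ : forall t, 0 <= t <= T -> is_derive Z t (exp ((-al)*t) * (P t * qq b c delta (N t) + (-al) * P t))).
  { intros t Ht. unfold Z. rewrite <- fP_id by auto. apply is_derive_mexp. apply (Hsol t Ht). }
  assert (HZ : forall t, 0 <= t <= T -> (fun t => - Z t) t < - (P 0) / 2).
  { apply cont_ind.
    - intros t Ht. apply cont_neg. eapply cont_of_der. apply HdZ; auto.
    - unfold Z. simpl. rewrite Rmult_0_r, exp_0. lra.
    - intros s Hs Hle. simpl.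
      assert (Z 0 <= Z s).
      { apply (mono_inc Z (fun u => exp ((-al)*u) * (P u * qq b c delta (N u) + (-al) * P u)) 0 s). lra. intros u Hu. apply HdZ; lra.
        intros u Hu. specialize (Hle u Hu). simpl in Hle. unfold Z in Hle.
        pose proof (exp_pos ((-al)*u)).
        assert (0 <= P u) by (destruct (Rle_or_lt 0 (P u)); auto; nra).
        destruct (Hreg u ltac:(lra)) as [Hq1 _].
        replace (P u * qq b c delta (N u) + - al * P u) with (P u * (qq b c delta (N u) - al)) by ring.
        apply Rmult_le_pos. lra. apply Rmult_le_pos; lra. }
      unfold Z at 1 in H. rewrite Rmult_0_r, exp_0, Rmult_1_r in H. lra. }
  specialize (HZ T ltac:(lra)). simpl in HZ. unfold Z in HZ.
  destruct (Hreg T ltac:(lra)) as [_ HPT].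
  assert (HPT2 : P 0 / 2 * exp (al * T) < P T).
  { assert (P 0 / 2 < P T * exp (- al * T)) by lra.
    apply (Rmult_lt_compat_r (exp (al * T))) in H; [|apply exp_pos].
    rewrite Rmult_assoc, <- exp_plus in H. replace (- al * T + al * T) with 0 in H by ring.
    rewrite exp_0, Rmult_1_r in H. exact H. }
  assert (P 0 / 2 * exp (al * T) > p / 4 * (4 * eps / p)).
  { apply Rmult_gt_0_lt_compat; try lra. }
  replace (p / 4 * (4 * eps / p)) with eps in H by (field; lra).
  apply Rabs_def2 in HPT. lra.
Qed.
End U2.

Theorem theorem5 (r K h w a b c delta : R) :
  0 < r -> 0 < K -> 0 < h -> 0 < w -> 0 < a -> 0 < b -> 0 < c -> 0 < delta ->
  w < K -> h < w ->
  (c < delta * (b + (N1 K h w) ^ 2) / N1 K h w ->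
     locally_asymptotically_stable (fN r K h w a b) (fP b c delta) (N1 K h w) 0)
  /\
  (c > delta * (b + (N1 K h w) ^ 2) / N1 K h w ->
     unstable (fN r K h w a b) (fP b c delta) (N1 K h w) 0 /\
     saddle (fN r K h w a b) (fP b c delta) (N1 K h w) 0).
Proof.
  intros Hr HK Hh Hw Ha Hb Hc Hd HwK Hhw. split.
  - intros Hcs. eapply stable_part; eauto.
  - intros Hcs. split.
    + eapply unstable_part; eauto.
    + eapply saddle_part; eauto.
Qed.
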